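(* Let $\widehat P$ be any transition kernel on finite $\mathcal S\times\mathcal A$, $r:\mathcal S\times\mathcal A\to[0,1]$, $n\ge2$ an integer, $s_0\in\mathcal S$, $\underline{\widehat P}=(1-\frac1n)\widehat P+\frac1n\mathbf 1e_{s_0}^\top$, and $\underline{\widehat{\mathcal T}}(h)(s)=\max_a\big(r(s,a)+\sum_{s'}\underline{\widehat P}(s'|s,a)h(s')\big)$. Suppose a policy $\pi$ satisfies one of: (i) $\pi$ is greedy with respect to $r+\underline{\widehat P}h$ for some $h$ with $\|\underline{\widehat h}^\star-h\|_{\mathrm{sp}}\le\frac1{n^2}$; (ii) $\underline{\widehat{\mathcal T}}(\underline{\widehat h}^\pi)\le\underline{\widehat h}^\pi+\underline{\widehat\rho}^\pi+\frac1{n^2}\mathbf 1$; (iii) $\underline{\widehat\rho}^\pi\ge\underline{\widehat\rho}^\star-\frac1{3n^2}\mathbf 1$ and $\|\underline{\widehat h}^\pi-\underline{\widehat h}^\star\|_\infty\le\frac1{3n^2}$. Then $\|\widehat V^\star_{1-\frac1n}-\widehat V^\pi_{1-\frac1n}\|_\infty\le\frac1n$. Furthermore, whenever $\|\widehat V^\star_{1-\frac1n}-\widehat V^\pi_{1-\frac1n}\|_\infty\le\frac1n$ holds, one has $\underline{\widehat\rho}^\pi\ge\underline{\widehat\rho}^\star-\frac1{n^2}\mathbf 1$ and $\|\underline{\widehat h}^\pi-\underline{\widehat h}^\star\|_{\mathrm{sp}}\le\frac2n$.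
   Context: $\underline{\widehat P}(s'|s,a)=(1-\frac1n)\widehat P(s'|s,a)+\frac1n\mathbb 1\{s'=s_0\}$. Policies stationary Markov, possibly randomized; a policy is greedy with respect to $x\in\mathbb R^{\mathcal S\times\mathcal A}$ if $\sum_a\pi(a|s)x(s,a)=\max_ax(s,a)$ for all $s$. $\widehat V^\pi_\gamma=(I-\gamma\widehat P_\pi)^{-1}r_\pi$, $\widehat V^\star_\gamma=\max_\pi\widehat V^\pi_\gamma$. $\underline{\widehat\rho}^\pi,\underline{\widehat h}^\pi$ are the gain $Q^\infty_\pi r_\pi$ and bias $\mathrm{C\text{-}lim}_T\sum_{t<T}(Q^t_\pi r_\pi-Q^\infty_\pi r_\pi)$ of $\pi$ with $Q=\underline{\widehat P}$ ($Q^\infty_\pi$ the Cesàro limit of $Q_\pi^t$); $\underline{\widehat\rho}^\star,\underline{\widehat h}^\star$ those of a Blackwell-optimal policy of $(\underline{\widehat P},r)$. $\|x\|_{\mathrm{sp}}=\max x-\min x$; inequalities elementwise. *)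

(* Defs.v *)
From HB Require Import structures.
From mathcomp Require Import all_boot all_order all_algebra.
From mathcomp Require Import all_classical all_reals all_analysis.
Set Implicit Arguments. Unset Strict Implicit. Unset Printing Implicit Defensive.
Import Order.TTheory GRing.Theory Num.Theory.
Import numFieldNormedType.Exports.
Local Open Scope classical_set_scope.
Local Open Scope ring_scope.

(* States: 'I_m.+1 ; actions: 'I_k.+1 (arbitrary nonempty finite sets).
   Kernels P s a s', rewards r s a, policies pi s a (= pi(a|s)).
   Value-type vectors are column vectors 'cV[R]_m.+1. *)
Section MDP.
Variables (R : realType) (m k : nat).
Notation St := 'I_m.+1.
Notation Ac := 'I_k.+1.

Definition is_kernel (P : St -> Ac -> St -> R) : Prop :=
  (forall s a s', 0 <= P s a s') /\ (forall s a, \sum_s' P s a s' = 1).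

Definition is_policy (pi : St -> Ac -> R) : Prop :=
  (forall s a, 0 <= pi s a) /\ (forall s, \sum_a pi s a = 1).

Definition perturb (n : nat) (s0 : St) (P : St -> Ac -> St -> R) : St -> Ac -> St -> R :=
  fun s a s' => (1 - n%:R^-1) * P s a s' + n%:R^-1 * (s' == s0)%:R.

Definition Ppi (P : St -> Ac -> St -> R) (pi : St -> Ac -> R) : 'M[R]_m.+1 :=
  \matrix_(s, s') \sum_a pi s a * P s a s'.

Definition rpi (r : St -> Ac -> R) (pi : St -> Ac -> R) : 'cV[R]_m.+1 :=
  \col_s \sum_a pi s a * r s a.

Definition Vpi (P : St -> Ac -> St -> R) (r : St -> Ac -> R) (gamma : R)
  (pi : St -> Ac -> R) : 'cV[R]_m.+1 :=
  invmx (1%:M - gamma *: Ppi P pi) *m rpi r pi.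

Definition Vstar (P : St -> Ac -> St -> R) (r : St -> Ac -> R) (gamma : R) : 'cV[R]_m.+1 :=
  \col_s sup [set (Vpi P r gamma pi) s 0 | pi in [set pi | is_policy pi]].

Definition cesaro_mean (x : nat -> R) (N : nat) : R :=
  (N.+1)%:R^-1 * \sum_(T < N.+1) x T.
Definition clim (x : nat -> R) : R := lim (cesaro_mean x @ \oo).

Definition Qinf (Q : 'M[R]_m.+1) : 'M[R]_m.+1 :=
  \matrix_(i, j) clim (fun t => (Q ^+ t) i j).

Definition gain (P : St -> Ac -> St -> R) (r : St -> Ac -> R) (pi : St -> Ac -> R)
  : 'cV[R]_m.+1 := Qinf (Ppi P pi) *m rpi r pi.

Definition bias (P : St -> Ac -> St -> R) (r : St -> Ac -> R) (pi : St -> Ac -> R)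
  : 'cV[R]_m.+1 :=
  \col_s clim (fun T => \sum_(t < T)
     ((Ppi P pi ^+ t *m rpi r pi) s 0 - (Qinf (Ppi P pi) *m rpi r pi) s 0)).

Definition blackwell_optimal (P : St -> Ac -> St -> R) (r : St -> Ac -> R)
  (pi : St -> Ac -> R) : Prop :=
  is_policy pi /\
  exists gamma0 : R, 0 <= gamma0 /\ gamma0 < 1 /\
    forall gamma, gamma0 < gamma -> gamma < 1 ->
      forall pi', is_policy pi' -> forall s, (Vpi P r gamma pi') s 0 <= (Vpi P r gamma pi) s 0.

Definition maxA (x : Ac -> R) : R := \big[Num.max/x ord0]_a x a.

Definition greedy (pi : St -> Ac -> R) (x : St -> Ac -> R) : Prop :=
  forall s, \sum_a pi s a * x s a = maxA (x s).

Definition bellman (P : St -> Ac -> St -> R) (r : St -> Ac -> R) (h : 'cV[R]_m.+1)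
  : 'cV[R]_m.+1 := \col_s maxA (fun a => r s a + \sum_s' P s a s' * h s' 0).

Definition spn (x : 'cV[R]_m.+1) : R :=
  \big[Num.max/x ord0 0]_s x s 0 - \big[Num.min/x ord0 0]_s x s 0.

Definition supn (x : 'cV[R]_m.+1) : R := \big[Num.max/0]_s `|x s 0|.

End MDP.

(* Main.v *)
Set Warnings "-all".
Require Import Defs.
From HB Require Import structures.
From mathcomp Require Import all_boot all_order all_algebra.
From mathcomp Require Import all_classical all_reals all_analysis.
From mathcomp Require Import ring lra.
Import Order.TTheory GRing.Theory Num.Theory.
Import numFieldNormedType.Exports.
Set Implicit Arguments. Unset Strict Implicit. Unset Printing Implicit Defensive.
Local Open Scope classical_set_scope.
Local Open Scope ring_scope.
Section Gen.
Variables (R : realType) (m : nat).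
Implicit Types (A : 'M[R]_m.+1) (x y : 'cV[R]_m.+1).

Definition stoch A := (forall i j, 0 <= A i j) /\ (forall i, \sum_j A i j = 1).

Lemma argmaxE {I : finType} (i0 : I) (F : I -> R) : exists i, forall j, F j <= F i.
Proof. by case: (@arg_maxP _ R I i0 xpredT F isT) => i _ H; exists i => j; apply: H. Qed.

Lemma vsubE x y s : (x - y) s 0 = x s 0 - y s 0.
Proof. by rewrite !mxE. Qed.

Lemma mulvsubE A x y s : (A *m (x - y)) s 0 = (A *m x) s 0 - (A *m y) s 0.
Proof. by rewrite mulmxBr vsubE. Qed.

Lemma stoch_le A x s M : stoch A -> (forall j, x j 0 <= M) -> (A *m x) s 0 <= M.
Proof.
move=> [A0 A1] xM; rewrite mxE.
apply: (@le_trans _ _ (\sum_j A s j * M)).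
  by apply: ler_sum => j _; rewrite ler_wpM2l.
by rewrite -mulr_suml A1 mul1r.
Qed.

Lemma stoch_ge A x s M : stoch A -> (forall j, M <= x j 0) -> M <= (A *m x) s 0.
Proof.
move=> [A0 A1] xM; rewrite mxE.
apply: (@le_trans _ _ (\sum_j A s j * M)).
  by rewrite -mulr_suml A1 mul1r.
by apply: ler_sum => j _; rewrite ler_wpM2l.
Qed.

Lemma cmp_le A d c x : stoch A -> 0 <= d -> d < 1 ->
  (forall s, x s 0 <= d * (A *m x) s 0 + c) -> forall s, x s 0 <= c / (1 - d).
Proof.
move=> sA d0 d1 H s.
have [i Hi] := argmaxE ord0 (fun j => x j 0).
have h1 : (A *m x) i 0 <= x i 0 by apply: stoch_le.
have h2 := H i.
have h3 : x i 0 * (1 - d) <= c by rewrite mulrBr mulr1; nra.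
rewrite ler_pdivlMr ?subr_gt0 //.
by apply: le_trans h3; rewrite ler_pM2r ?subr_gt0 ?Hi.
Qed.

Lemma cmp_ge A d c x : stoch A -> 0 <= d -> d < 1 ->
  (forall s, d * (A *m x) s 0 + c <= x s 0) -> forall s, c / (1 - d) <= x s 0.
Proof.
move=> sA d0 d1 H s.
have H2 := @cmp_le A d (- c) (- x) sA d0 d1.
have : (- x) s 0 <= - c / (1 - d).
  apply: H2 => t; move: (H t); rewrite mulmxN !mxE; lra.
by rewrite mxE mulNr lerN2.
Qed.

End Gen.
Section Lin.
Variables (R : realType) (m : nat).
Implicit Types (A : 'M[R]_m.+1) (x y b : 'cV[R]_m.+1).

Lemma fixE A d x b : x = invmx (1%:M - d *: A) *m b ->
  (1%:M - d *: A) \in unitmx -> forall s, x s 0 = b s 0 + d * (A *m x) s 0.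
Proof.
move=> -> U s.
have : (1%:M - d *: A) *m (invmx (1%:M - d *: A) *m b) = b by rewrite mulKVmx.
rewrite mulmxBl mul1mx -scalemxAl => /(congr1 (fun M : 'cV[R]_m.+1 => M s 0)).
rewrite !mxE => <-; lra.
Qed.

Lemma unit_stoch A d : stoch A -> 0 <= d -> d < 1 -> (1%:M - d *: A) \in unitmx.
Proof.
move=> sA d0 d1; rewrite unitmxE unitfE -det_tr.
apply/negP => /det0P [v vn0 vM]; move/negP: vn0; apply.
set x := v^T.
have Mx : (1%:M - d *: A) *m x = 0 by rewrite /x -[1%:M - _]trmxK -trmx_mul vM trmx0.
have xe : forall s, x s 0 = d * (A *m x) s 0.
  move=> s; move: (congr1 (fun M : 'cV[R]_m.+1 => M s 0) Mx).
  rewrite mulmxBl mul1mx -scalemxAl !mxE; lra.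
have h1 := @cmp_le R m A d 0 x sA d0 d1.
have h2 := @cmp_ge R m A d 0 x sA d0 d1.
apply/eqP/matrixP => i j; rewrite [i]ord1 !mxE.
have -> : v 0 j = x j 0 by rewrite /x mxE.
apply/eqP; rewrite eq_le; apply/andP; split.
  by rewrite -(mul0r (1 - d)^-1); apply: h1 => s; rewrite xe addr0.
by rewrite -(mul0r (1 - d)^-1); apply: h2 => s; rewrite xe addr0.
Qed.

Lemma uniqE A d x b : (1%:M - d *: A) \in unitmx ->
  (forall s, x s 0 = b s 0 + d * (A *m x) s 0) -> x = invmx (1%:M - d *: A) *m b.
Proof.
move=> U H.
have : (1%:M - d *: A) *m x = b.
  apply/matrixP => i j; move: (H i); rewrite [j]ord1 mulmxBl mul1mx -scalemxAl !mxE; lra.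
by move=> <-; rewrite mulKmx.
Qed.

End Lin.
Section MDP1.
Variables (R : realType) (m k : nat).
Notation St := 'I_m.+1.
Notation Ac := 'I_k.+1.
Implicit Types (P : St -> Ac -> St -> R) (r : St -> Ac -> R) (pi : St -> Ac -> R)
  (x y : 'cV[R]_m.+1).

Lemma stoch_Ppi P pi : is_kernel P -> is_policy pi -> stoch (Ppi P pi).
Proof.
move=> [P0 P1] [p0 p1]; split.
  by move=> i j; rewrite mxE; apply: sumr_ge0 => a _; rewrite mulr_ge0.
move=> i; under eq_bigr do rewrite mxE.
rewrite exchange_big /=; rewrite -[RHS](p1 i); apply: eq_bigr => a _.
by rewrite -mulr_sumr P1 mulr1.
Qed.

Lemma Ppi_mulE P pi x s :
  (Ppi P pi *m x) s 0 = \sum_a pi s a * \sum_s' P s a s' * x s' 0.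
Proof.
rewrite mxE; under eq_bigr do rewrite mxE mulr_suml.
rewrite exchange_big /=; apply: eq_bigr => a _; rewrite mulr_sumr.
by apply: eq_bigr => s' _; rewrite mulrA.
Qed.

Lemma rpiE r pi s : rpi r pi s 0 = \sum_a pi s a * r s a.
Proof. by rewrite mxE. Qed.

Lemma rpi_bnd r pi : (forall s a, 0 <= r s a <= 1) -> is_policy pi ->
  forall s, 0 <= rpi r pi s 0 <= 1.
Proof.
move=> hr [p0 p1] s; rewrite rpiE; apply/andP; split.
  by apply: sumr_ge0 => a _; rewrite mulr_ge0 //; case/andP: (hr s a).
rewrite -(p1 s); apply: ler_sum => a _; rewrite -[X in _ <= X]mulr1 ler_wpM2l //.
by case/andP: (hr s a).
Qed.

Lemma stoch_mono (A : 'M[R]_m.+1) x y s : stoch A -> (forall t, x t 0 <= y t 0) ->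
  (A *m x) s 0 <= (A *m y) s 0.
Proof.
move=> [A0 _] H; rewrite !mxE; apply: ler_sum => j _; rewrite ler_wpM2l //.
Qed.

Variables (P : St -> Ac -> St -> R) (r : St -> Ac -> R).
Hypothesis (kP : is_kernel P) (hr : forall s a, 0 <= r s a <= 1).

Lemma Vfix d pi : is_policy pi -> 0 <= d -> d < 1 -> forall s,
  Vpi P r d pi s 0 = rpi r pi s 0 + d * (Ppi P pi *m Vpi P r d pi) s 0.
Proof.
move=> hp d0 d1; apply: fixE => //; apply: unit_stoch => //; exact: stoch_Ppi.
Qed.

Lemma Vbnd d pi : is_policy pi -> 0 <= d -> d < 1 -> forall s,
  0 <= Vpi P r d pi s 0 <= 1 / (1 - d).
Proof.
move=> hp d0 d1 s; have sA := stoch_Ppi kP hp; have hb := rpi_bnd hr hp.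
apply/andP; split.
  rewrite -(mul0r (1 - d)^-1); apply: (cmp_ge sA d0 d1) => t.
  rewrite (Vfix hp d0 d1 t); case/andP: (hb t) => ? _; lra.
apply: (cmp_le sA d0 d1) => t.
rewrite (Vfix hp d0 d1 t); case/andP: (hb t) => _ ?; lra.
Qed.

Lemma improve_le d pi pi' c : is_policy pi -> is_policy pi' -> 0 <= d -> d < 1 ->
  (forall s, rpi r pi' s 0 + d * (Ppi P pi' *m Vpi P r d pi) s 0 <= Vpi P r d pi s 0 + c) ->
  forall s, Vpi P r d pi' s 0 <= Vpi P r d pi s 0 + c / (1 - d).
Proof.
move=> hp hp' d0 d1 H s.
have sA := stoch_Ppi kP hp'.
suff : (Vpi P r d pi' - Vpi P r d pi) s 0 <= c / (1 - d) by rewrite vsubE; lra.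
apply: (cmp_le sA d0 d1) => t.
rewrite mulvsubE !vsubE (Vfix hp' d0 d1 t); have := H t; lra.
Qed.

Lemma improve_ge d pi pi' c : is_policy pi -> is_policy pi' -> 0 <= d -> d < 1 ->
  (forall s, Vpi P r d pi s 0 + c <= rpi r pi' s 0 + d * (Ppi P pi' *m Vpi P r d pi) s 0) ->
  forall s, Vpi P r d pi s 0 + c / (1 - d) <= Vpi P r d pi' s 0.
Proof.
move=> hp hp' d0 d1 H s.
have sA := stoch_Ppi kP hp'.
suff : c / (1 - d) <= (Vpi P r d pi' - Vpi P r d pi) s 0 by rewrite vsubE; lra.
apply: (cmp_ge sA d0 d1) => t.
rewrite mulvsubE !vsubE (Vfix hp' d0 d1 t); have := H t; lra.
Qed.

Lemma Vmono d d' pi : is_policy pi -> 0 <= d -> d <= d' -> d' < 1 -> forall s,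
  0 <= Vpi P r d' pi s 0 - Vpi P r d pi s 0 <= (d' - d) / ((1 - d) * (1 - d')).
Proof.
move=> hp d0 dd d1 s.
have d1' : d < 1 by apply: le_lt_trans d1.
have d0' : 0 <= d' by apply: le_trans dd.
have sA := stoch_Ppi kP hp.
have hV := Vbnd hp d0' d1.
set D := Vpi P r d' pi - Vpi P r d pi.
have eD : forall t, D t 0 = d * (Ppi P pi *m D) t 0 + (d' - d) * (Ppi P pi *m Vpi P r d' pi) t 0.
  move=> t; rewrite /D mulvsubE !vsubE (Vfix hp d0' d1 t) (Vfix hp d0 d1' t); lra.
have AV0 : forall t, 0 <= (Ppi P pi *m Vpi P r d' pi) t 0.
  by move=> t; apply: stoch_ge => // j; case/andP: (hV j).
have AV1 : forall t, (Ppi P pi *m Vpi P r d' pi) t 0 <= 1 / (1 - d').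
  by move=> t; apply: stoch_le => // j; case/andP: (hV j).
have -> : Vpi P r d' pi s 0 - Vpi P r d pi s 0 = D s 0 by rewrite /D vsubE.
apply/andP; split.
  rewrite -(mul0r (1 - d)^-1); apply: (cmp_ge sA d0 d1') => t.
  rewrite eD; have := AV0 t; have : 0 <= d' - d by lra.
  move=> h1 h2; have := mulr_ge0 h1 h2; lra.
have -> : (d' - d) / ((1 - d) * (1 - d')) = ((d' - d) / (1 - d')) / (1 - d).
  by rewrite invfM mulrA [_ / (1 - d) / _]mulrAC.
apply: (cmp_le sA d0 d1') => t.
rewrite eD; have := AV1 t; have h0 : 0 <= d' - d by lra.
move=> h; have := ler_wpM2l h0 h; rewrite mul1r; lra.
Qed.

End MDP1.
Section MDP2.
Variables (R : realType) (m k : nat).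
Notation St := 'I_m.+1.
Notation Ac := 'I_k.+1.
Variables (P : St -> Ac -> St -> R) (r : St -> Ac -> R).
Hypothesis (kP : is_kernel P) (hr : forall s a, 0 <= r s a <= 1).
Variables (n : nat) (s0 : St).
Hypothesis n2 : (2 <= n)%N.

Let ni : R := n%:R^-1.
Lemma ni_bnd : 0 < ni /\ 2 * ni <= 1.
Proof.
have n0 : (0 : R) < n%:R by rewrite ltr0n; apply: leq_trans n2.
split; first by rewrite /ni invr_gt0.
rewrite /ni -ler_pdivlMr ?invr_gt0 // mul1r invrK.
by rewrite (ler_nat R 2 n).
Qed.

Lemma sum_delta (F : St -> R) : \sum_s' (s' == s0)%:R * F s' = F s0.
Proof.
rewrite (bigD1 s0) //= eqxx mul1r big1 ?addr0 // => i /negPf ->; by rewrite mul0r.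
Qed.

Lemma kernel_perturb : is_kernel (perturb n s0 P).
Proof.
case: kP => P0 P1; have [h1 h2] := ni_bnd; split.
  move=> s a s'; rewrite /perturb -/ni; apply: addr_ge0.
    by apply: mulr_ge0 => //; lra.
  by apply: mulr_ge0; [lra|rewrite ler0n].
move=> s a; rewrite /perturb -/ni big_split /= -!mulr_sumr P1.
have -> : \sum_s' (s' == s0)%:R = 1 :> R.
  by rewrite -[RHS](sum_delta (fun _ => 1)); apply: eq_bigr => i _; rewrite mulr1.
lra.
Qed.

Lemma QmulE pi (x : 'cV[R]_m.+1) s : is_policy pi ->
  (Ppi (perturb n s0 P) pi *m x) s 0 = (1 - ni) * (Ppi P pi *m x) s 0 + ni * x s0 0.
Proof.
case=> _ p1; rewrite !Ppi_mulE /perturb -/ni.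
have H : forall a, \sum_s' ((1 - ni) * P s a s' + ni * (s' == s0)%:R) * x s' 0
   = (1 - ni) * (\sum_s' P s a s' * x s' 0) + ni * x s0 0.
  move=> a; rewrite -(sum_delta (fun t => x t 0)) mulr_sumr mulr_sumr -big_split /=.
  by apply: eq_bigr => i _; ring.
under eq_bigr => a _ do rewrite H mulrDr.
rewrite big_split /=; congr (_ + _); last by rewrite -mulr_suml p1 mul1r.
by rewrite mulr_sumr; apply: eq_bigr => a _; ring.
Qed.

Lemma stoch_shift (A : 'M[R]_m.+1) (x y : 'cV[R]_m.+1) c s : stoch A ->
  (forall t, x t 0 = y t 0 + c) -> (A *m x) s 0 = (A *m y) s 0 + c.
Proof.
move=> [_ A1] H; rewrite !mxE; under eq_bigr do rewrite H mulrDr.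
by rewrite big_split /= -mulr_suml A1 mul1r.
Qed.

Lemma VPu beta pi : is_policy pi -> 0 <= beta -> beta < 1 -> forall s,
  Vpi (perturb n s0 P) r beta pi s 0 =
  Vpi P r (beta * (1 - ni)) pi s 0
  + (beta * ni / (1 - beta)) * Vpi P r (beta * (1 - ni)) pi s0 0.
Proof.
move=> hp b0 b1.
have [h1 h2] := ni_bnd.
set W := Vpi P r (beta * (1 - ni)) pi.
set K := beta * ni / (1 - beta).
set X : 'cV[R]_m.+1 := \col_s (W s 0 + K * W s0 0).
have XE : forall s, X s 0 = W s 0 + K * W s0 0 by move=> s; rewrite mxE.
have sQ := stoch_Ppi kernel_perturb hp.
have sA := stoch_Ppi kP hp.
have d0 : 0 <= beta * (1 - ni) by apply: mulr_ge0 => //; lra.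
have d1 : beta * (1 - ni) < 1.
  have : beta * (1 - ni) <= beta by rewrite ler_piMr //; lra.
  move=> h; apply: le_lt_trans h b1.
suff -> : Vpi (perturb n s0 P) r beta pi = X by [].
apply/esym; rewrite /Vpi; apply: uniqE; first by apply: unit_stoch.
move=> s; rewrite QmulE // (stoch_shift s sA XE) !XE.
rewrite /W (Vfix r kP hp d0 d1 s) -/W.
have eK : K = beta * (1 - ni) * K + beta * ni * (1 + K).
  rewrite /K; field; lra.
have : K * W s0 0 = (beta * (1 - ni) * K + beta * ni * (1 + K)) * W s0 0 by rewrite -eK.
lra.
Qed.

End MDP2.
Lemma lim0 (R : realType) (b1 y : R) : b1 < 1 ->
  (forall beta, b1 < beta -> beta < 1 -> y <= 1 - beta) -> y <= 0.
Proof.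
move=> hb H; rewrite leNgt; apply/negP => y0.
have [h|h] := lerP b1 (1 - y).
  have := H (1 - y / 2); lra.
have := H ((b1 + 1) / 2); lra.
Qed.

Section MDP3.
Variables (R : realType) (m k : nat).
Notation St := 'I_m.+1.
Notation Ac := 'I_k.+1.
Variables (P : St -> Ac -> St -> R) (r : St -> Ac -> R).
Hypothesis (kP : is_kernel P) (hr : forall s a, 0 <= r s a <= 1).
Variables (n : nat) (s0 : St).
Hypothesis n2 : (2 <= n)%N.
Variable pistar : St -> Ac -> R.
Hypothesis Hbw : blackwell_optimal (perturb n s0 P) r pistar.

Let ni : R := n%:R^-1.

Definition modpol (p1 p2 : St -> Ac -> R) (s : St) : St -> Ac -> R :=
  fun t a => if t == s then p1 t a else p2 t a.

Lemma modpol_policy p1 p2 s : is_policy p1 -> is_policy p2 -> is_policy (modpol p1 p2 s).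
Proof.
move=> [a0 a1] [b0 b1]; split => t; rewrite /modpol; case: (t == s) => //.
Qed.

Lemma modpol_r p1 p2 s t : rpi r (modpol p1 p2 s) t 0 =
  if t == s then rpi r p1 t 0 else rpi r p2 t 0.
Proof. by rewrite !rpiE /modpol; case: (t == s). Qed.

Lemma modpol_A p1 p2 s t (x : 'cV[R]_m.+1) : (Ppi P (modpol p1 p2 s) *m x) t 0 =
  if t == s then (Ppi P p1 *m x) t 0 else (Ppi P p2 *m x) t 0.
Proof. by rewrite !Ppi_mulE /modpol; case: (t == s). Qed.

Lemma bw_disc : exists b1, 0 <= b1 /\ b1 < 1 /\ forall beta, b1 < beta -> beta < 1 ->
  forall pi', is_policy pi' -> forall s,
   Vpi P r (beta * (1 - ni)) pi' s 0 <= Vpi P r (beta * (1 - ni)) pistar s 0.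
Proof.
case: Hbw => hps [g0 [g00 [g01 Hg]]].
have [h1 h2] := ni_bnd R n2; rewrite -/ni in h1 h2.
exists g0; split => //; split => // beta bg b1 pi' hp' .
have b0 : 0 <= beta by apply: le_trans (ltW bg).
set d := beta * (1 - ni).
have d0 : 0 <= d.
  by apply: mulr_ge0 => //; lra.
have d1 : d < 1.
  have : d <= beta by rewrite /d ler_piMr //; lra.
  move=> h; apply: le_lt_trans h b1.
set K := beta * ni / (1 - beta).
have K0 : 0 <= K by rewrite /K; apply: mulr_ge0; [apply: mulr_ge0; lra | rewrite invr_ge0; lra].
have BW : forall p, is_policy p -> forall s,
    Vpi P r d p s 0 + K * Vpi P r d p s0 0 <= Vpi P r d pistar s 0 + K * Vpi P r d pistar s0 0.
  move=> p hp s; have := Hg beta bg b1 p hp s.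
  by rewrite (VPu r kP s0 n2 hp b0 b1) (VPu r kP s0 n2 hps b0 b1).
set Ws := Vpi P r d pistar.
have Timp : forall p, is_policy p -> forall s,
    rpi r p s 0 + d * (Ppi P p *m Ws) s 0 <= Ws s 0 + 0.
  move=> p hp s; rewrite addr0 leNgt; apply/negP => Hlt.
  set p2 := modpol p pistar s.
  have hp2 : is_policy p2 by apply: modpol_policy.
  have Hge : forall t, Ws t 0 + 0 <= rpi r p2 t 0 + d * (Ppi P p2 *m Ws) t 0.
    move=> t; rewrite addr0 modpol_r modpol_A; case: eqP => [->|_].
      exact: ltW.
    by rewrite /Ws (Vfix r kP hps d0 d1 t).
  have W2 := improve_ge kP hps hp2 d0 d1 Hge.
  have W2' : forall t, Ws t 0 <= Vpi P r d p2 t 0.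
    by move=> t; have := W2 t; rewrite mul0r addr0.
  have mono : (Ppi P p2 *m Ws) s 0 <= (Ppi P p2 *m Vpi P r d p2) s 0.
    by apply: stoch_mono => //; apply: stoch_Ppi.
  have e2 := Vfix r kP hp2 d0 d1 s.
  have : rpi r p2 s 0 + d * (Ppi P p2 *m Ws) s 0 = rpi r p s 0 + d * (Ppi P p *m Ws) s 0.
    by rewrite modpol_r modpol_A eqxx.
  move=> e3.
  have hs : Ws s 0 < Vpi P r d p2 s 0.
    have := ler_wpM2l d0 mono; lra.
  have := BW p2 hp2 s; have := W2' s0.
  move=> h3 h4; have := ler_wpM2l K0 h3; lra.
move=> s; have := improve_le kP hps hp' d0 d1 (Timp pi' hp') s.
by rewrite mul0r addr0.
Qed.

Lemma opt_pistar : forall pi', is_policy pi' -> forall s,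
  Vpi P r (1 - ni) pi' s 0 <= Vpi P r (1 - ni) pistar s 0.
Proof.
case: Hbw => hps _.
have [h1 h2] := ni_bnd R n2; rewrite -/ni in h1 h2.
case: bw_disc => b1 [b10 [b11 Hb]].
move=> pi' hp' s.
set x := Vpi P r (1 - ni) pi' s 0 - Vpi P r (1 - ni) pistar s 0.
suff : x * (ni * ni) <= 0.
  by rewrite pmulr_lle0 ?mulr_gt0 // /x subr_le0.
apply: (lim0 b11) => beta hb hb1.
have b0 : 0 <= beta by apply: le_trans (ltW hb).
set d := beta * (1 - ni).
have d0 : 0 <= d.
  by apply: mulr_ge0 => //; lra.
have dg : d <= 1 - ni by rewrite /d ler_piMl //; lra.
have g1 : 1 - ni < 1 by lra.
have m1 := Vmono kP hr hp' d0 dg g1 s.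
have m2 := Vmono kP hr hps d0 dg g1 s.
have m3 := Hb beta hb hb1 pi' hp' s.
set q := (1 - ni - d) / ((1 - d) * (1 - (1 - ni))).
have q0 : 0 <= q by rewrite /q; apply: mulr_ge0; [lra| rewrite invr_ge0; apply: mulr_ge0; lra].
have d1 : d < 1 by lra.
have hq : q * ((1 - d) * ni) = 1 - ni - d.
  rewrite /q; field; apply/andP; split; rewrite gt_eqF //; lra.
have xq : x <= q by rewrite /x; move: m1 m2; rewrite -/q; lra.
have nd : ni <= 1 - d by lra.
have e1 : x * (ni * ni) <= q * (ni * ni) by rewrite ler_wpM2r ?mulr_ge0 //; lra.
have e2 : q * (ni * ni) <= q * ((1 - d) * ni) by rewrite ler_wpM2l // ler_wpM2r //; lra.
have e3 : 1 - ni - d <= 1 - beta.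
  have : (1 - ni) * (1 - beta) <= 1 - beta by rewrite ler_piMl //; lra.
  rewrite /d; lra.
lra.
Qed.

End MDP3.
Lemma geo0 (R : realType) (u : nat -> R) (C g : R) : 0 <= g < 1 ->
  (forall T, `|u T| <= C * g ^+ T) -> u @ \oo --> 0.
Proof.
move=> /andP[g0 g1] H.
have hg : `|g| < 1 by rewrite ger0_norm.
have c1 : (fun T => C * g ^+ T) @ \oo --> 0.
  by rewrite -(mulr0 C); apply: cvgMr; apply: cvg_expr.
have c2 : (fun T => - (C * g ^+ T)) @ \oo --> 0.
  by rewrite -oppr0; apply: cvgN.
apply: (squeeze_cvgr _ c2 c1); apply: nearW => T.
by have := H T; rewrite ler_norml.
Qed.

Lemma climE (R : realType) (x : nat -> R) (l : R) : x @ \oo --> l -> clim x = l.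
Proof.
move=> H; rewrite /clim.
have -> : cesaro_mean x = arithmetic_mean x.
  by apply: funext => N; rewrite /cesaro_mean /arithmetic_mean /= seriesEord.
apply: cvg_lim; first exact: Rhausdorff.
exact: (cesaro H).
Qed.

Lemma scaleE (R : realType) p q (c : R) (X : 'M[R]_(p, q)) i j : (c *: X) i j = c * X i j.
Proof. by rewrite mxE. Qed.

Section MC.
Variables (R : realType) (m k : nat).
Notation St := 'I_m.+1.
Notation Ac := 'I_k.+1.
Variables (P : St -> Ac -> St -> R) (r : St -> Ac -> R).
Hypothesis (kP : is_kernel P) (hr : forall s a, 0 <= r s a <= 1).
Variables (n : nat) (s0 : St).
Hypothesis n2 : (2 <= n)%N.
Variable pi : St -> Ac -> R.
Hypothesis hp : is_policy pi.

Let ni : R := n%:R^-1.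
Let g : R := 1 - ni.
Let A := Ppi P pi.
Let B := g *: A.
Let M : 'M[R]_m.+1 := 1%:M - g *: A.
Let iM := invmx M.

Lemma g_bnd : 0 <= g /\ g < 1.
Proof. have [h1 h2] := ni_bnd R n2; rewrite -/ni in h1 h2; rewrite /g; lra. Qed.

Lemma sA : stoch A. Proof. exact: stoch_Ppi. Qed.

Lemma unitM : M \in unitmx.
Proof. have [g0 g1] := g_bnd; exact: unit_stoch sA g0 g1. Qed.

Lemma powA_bnd (x : 'cV[R]_m.+1) T : (forall j, `|x j 0| <= 1) ->
  forall j, `|(A ^+ T *m x) j 0| <= 1.
Proof.
move=> hx; elim: T => [|T IH] j; first by rewrite expr0 mul1mx.
rewrite exprS -mulmxE -mulmxA ler_norml; apply/andP; split.
  by apply: stoch_ge; first exact: sA; move=> t; have := IH t; rewrite ler_norml => /andP[].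
by apply: stoch_le; first exact: sA; move=> t; have := IH t; rewrite ler_norml => /andP[].
Qed.

Lemma powB_bnd (x : 'cV[R]_m.+1) T : (forall j, `|x j 0| <= 1) ->
  forall j, `|(B ^+ T *m x) j 0| <= g ^+ T.
Proof.
move=> hx j; have [g0 g1] := g_bnd.
rewrite /B exprZn -scalemxAl mxE normrM ger0_norm ?exprn_ge0 //.
by rewrite -[X in _ <= X]mulr1 ler_wpM2l ?exprn_ge0 // powA_bnd.
Qed.

Lemma N1 (N : 'M[R]_m.+1) (x : 'cV[R]_m.+1) i : (forall j, `|x j 0| <= 1) ->
  (fun T => (N *m (B ^+ T *m x)) i 0) @ \oo --> 0.
Proof.
move=> hx; have [g0 g1] := g_bnd.
apply: (@geo0 R _ (\sum_j `|N i j|) g); first by rewrite g0 g1.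
move=> T; rewrite mxE (le_trans (ler_norm_sum _ _ _)) // mulr_suml.
apply: ler_sum => j _; rewrite normrM ler_wpM2l //; exact: powB_bnd.
Qed.

Lemma N2 (x : 'cV[R]_m.+1) T :
  \sum_(t < T) (B ^+ t *m x) = iM *m x - iM *m (B ^+ T *m x).
Proof.
have H : M *m (\sum_(t < T) (B ^+ t *m x)) = x - B ^+ T *m x.
  elim: T => [|T IH]; first by rewrite big_ord0 mulmx0 expr0 mul1mx subrr.
  rewrite big_ord_recr /= mulmxDr IH /M mulmxBl mul1mx exprS -mulmxE.
  by rewrite /B -!mulmxA addrA subrK.
by rewrite -mulmxBr -H mulKmx //; apply: unitM.
Qed.

Lemma Qpow (x : 'cV[R]_m.+1) t s :
  (Ppi (perturb n s0 P) pi ^+ t *m x) s 0 =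
  (B ^+ t *m x) s 0 + ni * \sum_(u < t) (B ^+ u *m x) s0 0.
Proof.
elim: t s => [|t IH] s; first by rewrite !expr0 !mul1mx big_ord0 mulr0 addr0.
rewrite exprS -mulmxE -mulmxA QmulE //.
set y := Ppi (perturb n s0 P) pi ^+ t *m x.
have yE : forall u, y u 0 = (B ^+ t *m x) u 0 + ni * \sum_(u < t) (B ^+ u *m x) s0 0.
  by move=> u; rewrite /y IH.
rewrite (stoch_shift s sA yE) yE big_ord_recr /= exprS -mulmxE -mulmxA /B -scalemxAl.
rewrite scaleE /g -/ni; ring.
Qed.

Let Q := Ppi (perturb n s0 P) pi.
Let b := rpi r pi.

Lemma b_bnd : forall j, `|b j 0| <= 1.
Proof.
move=> j; have := rpi_bnd hr hp j; rewrite -/b => /andP[h1 h2].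
by rewrite ger0_norm.
Qed.

Lemma N2E (x : 'cV[R]_m.+1) T s :
  \sum_(t < T) (B ^+ t *m x) s 0 = (iM *m x) s 0 - (iM *m (B ^+ T *m x)) s 0.
Proof. by rewrite -summxE N2 vsubE. Qed.

Lemma Qt_cvg i j : (fun t => (Q ^+ t) i j) @ \oo --> ni * iM s0 j.
Proof.
set e : 'cV[R]_m.+1 := \col_s (s == j)%:R.
have colE : forall (X : 'M[R]_m.+1) i', (X *m e) i' 0 = X i' j.
  move=> X i'; rewrite mxE (bigD1 j) //= mxE eqxx mulr1 big1 ?addr0 //.
  by move=> l /negPf hl; rewrite mxE hl mulr0.
have he : forall l, `|e l 0| <= 1.
  by move=> l; rewrite mxE; case: (l == j); rewrite ?normr1 ?normr0.
have E : (fun t => (Q ^+ t) i j) = (fun t => (1%:M *m (B ^+ t *m e)) i 0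
      + ni * (iM s0 j - (iM *m (B ^+ t *m e)) s0 0)).
  by apply: funext => t; rewrite -colE /Q Qpow N2E mul1mx !colE.
rewrite E.
have -> : ni * iM s0 j = 0 + ni * (iM s0 j - 0) by rewrite add0r subr0.
apply: cvgD; first exact: N1.
apply: cvgMr; apply: cvgB; first exact: cvg_cst.
exact: N1.
Qed.

Lemma QinfE i j : Qinf Q i j = ni * iM s0 j.
Proof. by rewrite mxE; apply: climE; apply: Qt_cvg. Qed.

Lemma QinfbE s : (Qinf Q *m b) s 0 = ni * Vpi P r g pi s0 0.
Proof.
rewrite /Vpi -/A -/M -/iM -/b !mxE mulr_sumr; apply: eq_bigr => j _.
by rewrite QinfE mulrA.
Qed.

Lemma gainE s : gain (perturb n s0 P) r pi s 0 = ni * Vpi P r g pi s0 0.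
Proof. exact: QinfbE. Qed.

Lemma biasE : exists c, forall s, bias (perturb n s0 P) r pi s 0 = Vpi P r g pi s 0 - c.
Proof.
set V := Vpi P r g pi.
have VE : V = iM *m b by [].
exists (ni * (iM *m V) s0 0) => s.
rewrite mxE; apply: climE.
set z := fun T => B ^+ T *m b.
have term : forall t, (Q ^+ t *m b) s 0 - (Qinf Q *m b) s 0 =
    (z t) s 0 - ni * (iM *m z t) s0 0.
  move=> t; rewrite /Q Qpow -/Q QinfbE -/V N2E -VE /z.
by rewrite mulrBr addrA addrAC addrK.
have E : (fun T => \sum_(t < T) ((Q ^+ t *m b) s 0 - (Qinf Q *m b) s 0)) =
   (fun T => (iM *m (B ^+ T *m b)) s 0 * (-1) + (V s 0 - ni * ((iM *m V) s0 0
        - ((iM *m iM) *m (B ^+ T *m b)) s0 0))).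
  apply: funext => T; under eq_bigr do rewrite term.
  rewrite sumrB -mulr_sumr N2E -VE.
  have -> : \sum_(i < T) (iM *m z i) s0 0 = (iM *m \sum_(i < T) z i) s0 0.
    by rewrite mulmx_sumr summxE.
  rewrite /z N2 -VE mulmxBr vsubE -mulmxA.
move: (V s 0) (iM *m (B ^+ T *m b)) (iM *m (iM *m (B ^+ T *m b))) (iM *m V) => v1 M1 M2 M3.
ring.
rewrite /Q E.
have -> : V s 0 - ni * (iM *m V) s0 0 = 0 * (-1) + (V s 0 - ni * ((iM *m V) s0 0 - 0)).
  by rewrite mul0r add0r subr0.
apply: cvgD; first by apply: cvgMl; apply: N1; exact: b_bnd.
apply: cvgB; first exact: cvg_cst.
apply: cvgMr; apply: cvgB; first exact: cvg_cst.
by apply: N1; exact: b_bnd.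
Qed.

End MC.
Section Big.
Variable R : realType.

Lemma max_cases (y z : R) : Num.max y z = y \/ Num.max y z = z.
Proof. by case: lerP => _; auto. Qed.

Lemma min_cases (y z : R) : Num.min y z = y \/ Num.min y z = z.
Proof. by case: lerP => _; auto. Qed.

Lemma bigmax_ge {I : finType} (F : I -> R) x0 i : F i <= \big[Num.max/x0]_j F j.
Proof. by rewrite (bigD1 i) //= le_max lexx. Qed.

Lemma bigmax_le {I : finType} (F : I -> R) x0 c : x0 <= c -> (forall i, F i <= c) ->
  \big[Num.max/x0]_j F j <= c.
Proof.
move=> h0 h; apply: (big_ind (fun y => y <= c)) => // y z hy hz.
by rewrite ge_max hy hz.
Qed.

Lemma bigmin_le {I : finType} (F : I -> R) x0 i : \big[Num.min/x0]_j F j <= F i.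
Proof. by rewrite (bigD1 i) //= ge_min lexx. Qed.

Lemma bigmax_att {I : finType} (F : I -> R) i0 : exists i, \big[Num.max/F i0]_j F j = F i.
Proof.
apply: (big_ind (fun y => exists i, y = F i)); first by exists i0.
  by move=> y z [i ->] [j ->]; case: (max_cases (F i) (F j)) => ->; [exists i|exists j].
by move=> i _; exists i.
Qed.

Lemma bigmin_att {I : finType} (F : I -> R) i0 : exists i, \big[Num.min/F i0]_j F j = F i.
Proof.
apply: (big_ind (fun y => exists i, y = F i)); first by exists i0.
  by move=> y z [i ->] [j ->]; case: (min_cases (F i) (F j)) => ->; [exists i|exists j].
by move=> i _; exists i.
Qed.

Variable m : nat.
Implicit Types x : 'cV[R]_m.+1.

Lemma supn_le x c : 0 <= c -> (forall s, `|x s 0| <= c) -> supn x <= c.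
Proof. by move=> h0 h; apply: bigmax_le. Qed.

Lemma supn_ge x s : `|x s 0| <= supn x.
Proof. exact: (bigmax_ge (fun s => `|x s 0|)). Qed.

Lemma spn_le x c : (forall s t, x s 0 - x t 0 <= c) -> spn x <= c.
Proof.
move=> h; rewrite /spn.
case: (bigmax_att (fun s => x s 0) ord0) => i ->.
by case: (bigmin_att (fun s => x s 0) ord0) => j ->.
Qed.

Lemma spn_ge x s t : x s 0 - x t 0 <= spn x.
Proof.
rewrite /spn lerB //; first exact: (bigmax_ge (fun s => x s 0)).
exact: (bigmin_le (fun s => x s 0)).
Qed.

End Big.

Section Pol.
Variables (R : realType) (m k : nat).
Notation St := 'I_m.+1.
Notation Ac := 'I_k.+1.

Lemma pol_le (p : St -> Ac -> R) s (f : Ac -> R) C : is_policy p -> (forall a, f a <= C) ->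
  \sum_a p s a * f a <= C.
Proof.
move=> [p0 p1] h; apply: (@le_trans _ _ (\sum_a p s a * C)).
  by apply: ler_sum => a _; rewrite ler_wpM2l.
by rewrite -mulr_suml p1 mul1r.
Qed.

Lemma pol_ge (p : St -> Ac -> R) s (f : Ac -> R) C : is_policy p -> (forall a, C <= f a) ->
  C <= \sum_a p s a * f a.
Proof.
move=> [p0 p1] h; apply: (@le_trans _ _ (\sum_a p s a * C)).
  by rewrite -mulr_suml p1 mul1r.
by apply: ler_sum => a _; rewrite ler_wpM2l.
Qed.

Lemma pol_argmax (p : St -> Ac -> R) s (f : Ac -> R) : is_policy p ->
  exists a, \sum_a p s a * f a <= f a.
Proof.
move=> hp; case: (argmaxE ord0 f) => a ha; exists a; exact: pol_le.
Qed.

Lemma TpiE (P : St -> Ac -> St -> R) (r : St -> Ac -> R) (p : St -> Ac -> R) d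
  (x : 'cV[R]_m.+1) s :
  rpi r p s 0 + d * (Ppi P p *m x) s 0 =
  \sum_a p s a * (r s a + d * \sum_s' P s a s' * x s' 0).
Proof.
rewrite rpiE Ppi_mulE mulr_sumr -big_split /=; apply: eq_bigr => a _; ring.
Qed.

Lemma PuE (P : St -> Ac -> St -> R) n s0 s a (h : 'cV[R]_m.+1) :
  \sum_s' perturb n s0 P s a s' * h s' 0 =
  (1 - n%:R^-1) * \sum_s' P s a s' * h s' 0 + n%:R^-1 * h s0 0.
Proof.
rewrite /perturb.
rewrite -[X in _ + _ * X](sum_delta s0 (fun t => h t 0)) !mulr_sumr -big_split /=.
by apply: eq_bigr => i _; ring.
Qed.

Lemma maxA_ge (x : Ac -> R) a : x a <= Defs.maxA x.
Proof. exact: bigmax_ge. Qed.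

Lemma ker_le (P : St -> Ac -> St -> R) s a (f : St -> R) C : is_kernel P ->
  (forall t, f t <= C) -> \sum_t P s a t * f t <= C.
Proof.
move=> [p0 p1] h; apply: (@le_trans _ _ (\sum_t P s a t * C)).
  by apply: ler_sum => t _; rewrite ler_wpM2l.
by rewrite -mulr_suml p1 mul1r.
Qed.

Lemma ker_ge (P : St -> Ac -> St -> R) s a (f : St -> R) C : is_kernel P ->
  (forall t, C <= f t) -> C <= \sum_t P s a t * f t.
Proof.
move=> [p0 p1] h; apply: (@le_trans _ _ (\sum_t P s a t * C)).
  by rewrite -mulr_suml p1 mul1r.
by apply: ler_sum => t _; rewrite ler_wpM2l.
Qed.

Lemma ker_shift (P : St -> Ac -> St -> R) s a (f : St -> R) c : is_kernel P ->
  \sum_t P s a t * (f t - c) = \sum_t P s a t * f t - c.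
Proof.
move=> [p0 p1]; under eq_bigr do rewrite mulrBr.
by rewrite sumrB -mulr_suml p1 mul1r.
Qed.

Lemma pol_sum1 (p : St -> Ac -> R) s (f : Ac -> R) c : is_policy p ->
  \sum_a p s a * (f a + c) = \sum_a p s a * f a + c.
Proof.
move=> [p0 p1]; under eq_bigr do rewrite mulrDr.
by rewrite big_split /= -mulr_suml p1 mul1r.
Qed.

End Pol.
Theorem mainTheorem19 (R : realType) (m k : nat)
  (P : 'I_m.+1 -> 'I_k.+1 -> 'I_m.+1 -> R) (r : 'I_m.+1 -> 'I_k.+1 -> R)
  (n : nat) (s0 : 'I_m.+1) (pistar pi : 'I_m.+1 -> 'I_k.+1 -> R) :
  is_kernel P ->
  (forall s a, 0 <= r s a <= 1) ->
  (2 <= n)%N ->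
  blackwell_optimal (perturb n s0 P) r pistar ->
  is_policy pi ->
  let Pu := perturb n s0 P in
  let gamma := 1 - n%:R^-1 in
  let rho_star := gain Pu r pistar in
  let h_star := bias Pu r pistar in
  let rho_pi := gain Pu r pi in
  let h_pi := bias Pu r pi in
  ((exists h : 'cV[R]_m.+1,
       spn (h_star - h) <= (n%:R ^+ 2)^-1 /\
       greedy pi (fun s a => r s a + \sum_s' Pu s a s' * h s' 0))
   \/ (forall s, (bellman Pu r h_pi) s 0 <= h_pi s 0 + rho_pi s 0 + (n%:R ^+ 2)^-1)
   \/ ((forall s, rho_star s 0 - (3 * n%:R ^+ 2)^-1 <= rho_pi s 0) /\
       supn (h_pi - h_star) <= (3 * n%:R ^+ 2)^-1)
   -> supn (Vstar P r gamma - Vpi P r gamma pi) <= n%:R^-1)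
  /\
  (supn (Vstar P r gamma - Vpi P r gamma pi) <= n%:R^-1 ->
     (forall s, rho_star s 0 - (n%:R ^+ 2)^-1 <= rho_pi s 0) /\
     spn (h_pi - h_star) <= 2 / n%:R).
Proof.
move=> kP hr n2 Hbw hp Pu gamma rho_star h_star rho_pi h_pi.
rewrite /h_pi /rho_pi /h_star /rho_star /gamma /Pu.
have hps : is_policy pistar by case: Hbw.
have [h1 h2] := ni_bnd R n2.
have opt := opt_pistar kP hr n2 Hbw.
have Vle : forall s, Vpi P r (1 - n%:R^-1) pi s 0 <= Vpi P r (1 - n%:R^-1) pistar s 0.
  by move=> s; apply: opt.
have VsE : forall s, Vstar P r (1 - n%:R^-1) s 0 = Vpi P r (1 - n%:R^-1) pistar s 0.
  move=> s; rewrite /Vstar mxE.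
  have ub : ubound [set (Vpi P r (1 - n%:R^-1) pi') s 0 | pi' in [set pi | is_policy pi]]
      (Vpi P r (1 - n%:R^-1) pistar s 0).
    by move=> y [p hp' <-]; apply: opt.
  apply/eqP; rewrite eq_le; apply/andP; split.
    by apply: ge_sup => //; exists (Vpi P r (1 - n%:R^-1) pistar s 0); exists pistar.
  apply: (ub_le_sup); first by exists (Vpi P r (1 - n%:R^-1) pistar s 0).
  by exists pistar.
have diffE : forall s, (Vstar P r (1 - n%:R^-1) - Vpi P r (1 - n%:R^-1) pi) s 0 =
    Vpi P r (1 - n%:R^-1) pistar s 0 - Vpi P r (1 - n%:R^-1) pi s 0.
  by move=> s; rewrite vsubE VsE.
have gE := gainE r kP s0 n2 hp.
have gsE := gainE r kP s0 n2 hps.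
have [c hE] := biasE kP hr s0 n2 hp.
have [cs hsE] := biasE kP hr s0 n2 hps.
have eps : (n%:R ^+ 2)^-1 = n%:R^-1 * n%:R^-1 :> R by rewrite -exprVn expr2.
have del : (3 * n%:R ^+ 2)^-1 = n%:R^-1 * n%:R^-1 / 3 :> R.
  by rewrite invfM -exprVn expr2 mulrC.
set ni := n%:R^-1 in h1 h2 opt Vle VsE diffE gE gsE hE hsE eps del *.
have g0 : 0 <= 1 - ni by lra.
have g1 : 1 - ni < 1 by lra.
set V := Vpi P r (1 - ni) pi in Vle diffE gE hE *.
set Vs := Vpi P r (1 - ni) pistar in Vle VsE diffE gsE hsE *.
split.
  move=> H.
  suff key : forall s, Vs s 0 - V s 0 <= ni.
    apply: supn_le; first lra.
    by move=> s; rewrite diffE ger0_norm ?key // subr_ge0 Vle.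
  case: H => [[h [hsp hgr]] | [Hb | [Hr Hh]]].
  -
    rewrite eps in hsp.
    have nn0 : 0 <= ni * ni by apply: mulr_ge0; lra.
    have he : forall s t, (h t 0 - Vs t 0) - (h s 0 - Vs s 0) <= ni * ni.
      move=> s t; have := le_trans (spn_ge (bias (perturb n s0 P) r pistar - h) s t) hsp.
      by rewrite !vsubE !hsE; lra.
    case: (argmaxE ord0 (fun t => Vs t 0 - h t 0)) => tm htm.
    set lo := h tm 0 - Vs tm 0.
    have elo : forall t, lo <= h t 0 - Vs t 0 <= lo + ni * ni.
      move=> t; apply/andP; split; first by have := htm t; rewrite /lo; lra.
      by have := he tm t; rewrite /lo; lra.
    have H' : forall s, Vs s 0 + (- ((1 - ni) * (ni * ni))) <=
        rpi r pi s 0 + (1 - ni) * (Ppi P pi *m Vs) s 0.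
      move=> s; rewrite TpiE.
      set f := fun a => r s a + (1 - ni) * \sum_s' P s a s' * Vs s' 0.
      have VsF : Vs s 0 = \sum_a pistar s a * f a.
        by rewrite /Vs (Vfix r kP hps g0 g1 s) TpiE.
      case: (pol_argmax s f hps) => a' ha'.
      have G : r s a' + (1 - ni) * \sum_s' P s a' s' * h s' 0 <=
          \sum_a pi s a * (r s a + (1 - ni) * \sum_s' P s a s' * h s' 0).
        have := maxA_ge (fun a => r s a + \sum_s' perturb n s0 P s a s' * h s' 0) a'.
        rewrite -hgr /= (PuE P n s0 s a' h).
        under eq_bigr => a _ do rewrite PuE -/ni addrA.
        rewrite pol_sum1 // -/ni. lra.
      set pe := fun a => \sum_s' P s a s' * (h s' 0 - Vs s' 0).
      have pvE : forall a, \sum_s' P s a s' * Vs s' 0 = \sum_s' P s a s' * h s' 0 - pe a.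
        by move=> a; rewrite /pe -sumrB; apply: eq_bigr => t _; ring.
      have peb : forall a, lo <= pe a <= lo + ni * ni.
        move=> a; apply/andP; split.
          by apply: ker_ge => // t; case/andP: (elo t).
        by apply: ker_le => // t; case/andP: (elo t).
      have SE : \sum_a pi s a * f a =
          \sum_a pi s a * (r s a + (1 - ni) * \sum_s' P s a s' * h s' 0)
          - (1 - ni) * \sum_a pi s a * pe a.
        rewrite mulr_sumr -sumrB; apply: eq_bigr => a _; rewrite /f pvE; ring.
      rewrite -/f SE.
      have s1 : \sum_a pi s a * pe a <= lo + ni * ni.
        by apply: pol_le => // a; case/andP: (peb a).
      have s2 := ler_wpM2l g0 s1.
      have s3 : (1 - ni) * lo <= (1 - ni) * pe a'.
        by apply: ler_wpM2l => //; case/andP: (peb a').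
      have fa : f a' = r s a' + (1 - ni) * (\sum_s' P s a' s' * h s' 0 - pe a') by rewrite /f pvE.
      move: ha'; rewrite -VsF fa; lra.
    move=> s; have := improve_ge kP hps hp g0 g1 H' s; rewrite -/V -/Vs.
    have -> : - ((1 - ni) * (ni * ni)) / (1 - (1 - ni)) = - ((1 - ni) * ni).
      by field; rewrite gt_eqF //; lra.
    have := ler_wpM2l (ltW h1) h2; lra.
  -
    have H' : forall s, rpi r pistar s 0 + (1 - ni) * (Ppi P pistar *m V) s 0 <= V s 0 + ni * ni.
      move=> s; rewrite TpiE; apply: pol_le => // a.
      have Hb' := Hb s; rewrite /bellman mxE in Hb'.
      have := le_trans (maxA_ge _ a) Hb'.
      rewrite (PuE P n s0 s a (bias (perturb n s0 P) r pi)) -/ni /=.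
      have -> : \sum_s' P s a s' * bias (perturb n s0 P) r pi s' 0 =
                \sum_s' P s a s' * V s' 0 - c.
        by rewrite -ker_shift //; apply: eq_bigr => t _; rewrite hE.
      rewrite !hE gE eps; lra.
    move=> s; have := improve_le kP hp hps g0 g1 H' s; rewrite -/V -/Vs.
    have -> : ni * ni / (1 - (1 - ni)) = ni by field; rewrite gt_eqF //; lra.
    lra.
  -
    rewrite del in Hh.
    have b1 : forall s, `|(V s 0 - c) - (Vs s 0 - cs)| <= ni * ni / 3.
      move=> s; have := le_trans (supn_ge _ s) Hh; by rewrite vsubE hE hsE.
    have k0 : ni * (Vs s0 0 - V s0 0) <= ni * (ni / 3).
      by have := Hr s0; rewrite gE gsE del; lra.
    rewrite ler_pM2l // in k0.
    have nn : ni * (2 * ni) <= ni * 1 := ler_wpM2l (ltW h1) h2.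
    move=> s; have := b1 s; have := b1 s0; rewrite !ler_norml; lra.
move=> H.
have key : forall s, Vs s 0 - V s 0 <= ni.
  by move=> s; rewrite -diffE; apply: le_trans (ler_norm _) (le_trans (supn_ge _ s) H).
split.
  move=> s; rewrite gE gsE eps.
  have := key s0; have := ler_wpM2l (ltW h1) (key s0); lra.
apply: spn_le => s t; rewrite !vsubE !hE !hsE.
have := key t; have := Vle s; lra.
Qed.
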